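(* Let $P$ be a non-centered \textsf{Z}-convex polyomino which is descending. Let $c_1$ be the leftmost column of $P$, let $X$ be the row of $P$ containing the top cell of $c_1$ and $Y$ the row containing the bottom cell of $c_1$. Let $S$ be the column of $P$ containing the rightmost cell of $X$, and $T$ the column of $P$ containing the rightmost cell of $Y$. Let $\theta$ be the set of cells of $P$ lying in columns strictly to the right of $T$. Then $\theta$ contains no cell lower than the lowest cell of $P$ in the column $S$.
   Context: A cell is a unit square of $\mathbb Z\times\mathbb Z$; a polyomino is a finite connected union of cells with no cut point. A polyomino is convex if its intersection with every vertical and every horizontal line of cells is connected; a convex polyomino is centered if some row touches both the left and right sides of its minimal bounding rectangle. A path in a polyomino is a self-avoiding sequence of unit steps $N,S,E,W$ between adjacent cells; it is monotone if it uses only two step types; a change of direction is a pair of consecutive distinct steps. A convex polyomino is \textsf{Z}-convex if every pair of its cells is connected by a monotone path with at most two changes of direction. For a non-centered convex polyomino with $c_1,X,Y$ as in the claim, its rightmost column lies entirely above $X$ or entirely below $Y$; it is called descending if its rightmost column lies entirely below the row $Y$. *)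

(* Defs.v *)
(* Cells of Z x Z are pairs (x, y) : int * int,
   x = column index (increasing to the East), y = row index (increasing to the North). *)
From HB Require Import structures.
From mathcomp Require Import all_boot all_order all_algebra.
From mathcomp Require Import finmap.
Set Implicit Arguments. Unset Strict Implicit. Unset Printing Implicit Defensive.
Import Order.TTheory GRing.Theory Num.Theory.
Local Open Scope ring_scope.
Local Open Scope fset_scope.

Definition cell := (int * int)%type.

Definition adj (a b : cell) : bool :=
  ((`|a.1 - b.1| + `|a.2 - b.2|)%N == 1%N).

(* the unit step from a to b, encoded as the displacement vector:
   N = (0,1), S = (0,-1), E = (1,0), W = (-1,0) *)
Definition step (a b : cell) : cell := (b.1 - a.1, b.2 - a.2).

Definition cell_path (P : {fset cell}) (a b : cell) (p : seq cell) : Prop :=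
  [/\ path adj a p, all (fun c => c \in P) (a :: p) & last a p = b].

Definition sa_path (P : {fset cell}) (a b : cell) (p : seq cell) : Prop :=
  cell_path P a b p /\ uniq (a :: p).

Definition steps (a : cell) (p : seq cell) : seq cell := pairmap step a p.

Definition monotone (a : cell) (p : seq cell) : bool :=
  (size (undup (steps a p)) <= 2)%N.

Definition nchanges (s : seq cell) : nat :=
  match s with
  | [::] => 0%N
  | x :: s' => count id (pairmap (fun u v => u != v) x s')
  end.

Definition polyomino (P : {fset cell}) : Prop :=
  P != fset0 /\
  forall a b, a \in P -> b \in P -> exists p, cell_path P a b p.

Definition convex_polyomino (P : {fset cell}) : Prop :=
  polyomino P /\
  (forall (y x1 x2 x : int), (x1, y) \in P -> (x2, y) \in P ->
       x1 <= x <= x2 -> (x, y) \in P) /\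
  (forall (x y1 y2 y : int), (x, y1) \in P -> (x, y2) \in P ->
       y1 <= y <= y2 -> (x, y) \in P).

Definition centered (P : {fset cell}) : Prop :=
  exists (y xl xr : int), [/\ (xl, y) \in P, (xr, y) \in P &
     forall c, c \in P -> xl <= c.1 <= xr].

Definition Z_convex (P : {fset cell}) : Prop :=
  convex_polyomino P /\
  forall a b, a \in P -> b \in P ->
    exists p, [/\ sa_path P a b p, monotone a p & (nchanges (steps a p) <= 2)%N].

(* Main.v *)
Require Import Defs.
From HB Require Import structures.
From mathcomp Require Import all_boot all_order all_algebra.
From mathcomp Require Import finmap zify.
Import Order.TTheory GRing.Theory Num.Theory.
Local Open Scope ring_scope.
Local Open Scope fset_scope.

Definition dE : cell := (1, 0).
Definition dS : cell := (0, -1).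
Definition other (d : cell) : cell := if d == dE then dS else dE.

Definition Spec0 (d a b : cell) : Prop :=
  if d == dE then b.2 = a.2 /\ a.1 <= b.1 else b.1 = a.1 /\ b.2 <= a.2.

Fixpoint Spec (P : {fset cell}) (k : nat) (d a b : cell) : Prop :=
  match k with
  | 0%N => Spec0 d a b
  | k'.+1 => exists m, m \in P /\ Spec0 d a m /\ Spec P k' (other d) m b
  end.

Lemma Spec0_refl d a : Spec0 d a a.
Proof. rewrite /Spec0; case: ifP => _; split => //. Qed.

Lemma Spec0_trans d a b c : Spec0 d a b -> Spec0 d b c -> Spec0 d a c.
Proof. rewrite /Spec0; case: ifP => _ [h1 h2] [h3 h4]; split; lia. Qed.

Lemma Spec_lift P k : forall d a b, b \in P -> Spec0 d a b -> Spec P k d a b.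
Proof.
elim: k => [|k IH] d a b bP h //=.
exists b; split => //; split => //; apply: IH => //; exact: Spec0_refl.
Qed.

Lemma Spec_ext P k d a x b : Spec0 d a x -> Spec P k d x b -> Spec P k d a b.
Proof.
case: k => [|k] /= h.
  exact: Spec0_trans.
move=> [m [mP [hm hr]]]; exists m; split => //; split => //.
exact: Spec0_trans hm.
Qed.

Definition isES (d : cell) : bool := (d == dE) || (d == dS).

Lemma step_spec0 a x : isES (step a x) -> Spec0 (step a x) a x.
Proof.
rewrite /isES /Spec0; case/orP => /eqP h; rewrite h.
  rewrite eqxx; move: h; rewrite /step /dE => -[] h1 h2; split; lia.
have -> : (dS == dE) = false by [].
move: h; rewrite /step /dS => -[] h1 h2; split; lia.
Qed.

Lemma spec_path P : forall p a k, path adj a p -> all (fun c => c \in P) (a :: p) ->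
  all isES (steps a p) -> p != [::] -> (nchanges (steps a p) <= k)%N ->
  Spec P k (step a (head a p)) a (last a p).
Proof.
elim => [|x p IH] a k //= /andP [hadj hp] /and3P [aP xP hall] /andP [hes hesr] _.
case: p IH hp hall hesr => [|y p] IH hp hall hesr /=.
  move=> _; apply: Spec_lift => //; exact: step_spec0.
rewrite /steps /= => hk.
have IH' := IH x.
case: (eqVneq (step a x) (step x y)) => hd.
  rewrite hd eqxx /= add0n in hk.
  apply: (@Spec_ext _ _ _ a x); first exact: step_spec0.
  rewrite hd; apply: IH' => //=; by rewrite xP.
move: hk; rewrite hd /= add1n => hk.
case: k hk => [|k] // hk.
exists x; split => //; split; first exact: step_spec0.
have -> : other (step a x) = step x y.
  move: hes hesr hd; rewrite /other /isES /= => /orP [] /eqP -> /andP [/orP [] /eqP -> _] //.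
apply: (IH' k) => //=; by rewrite xP.
Qed.

Lemma unit_stepE (u v : cell) : adj u v -> 0 < (step u v).1 -> step u v = dE.
Proof.
rewrite /adj /step /dE; case: u v => [u1 u2] [v1 v2] /= /eqP H Hp.
congr pair; lia.
Qed.

Lemma unit_stepS (u v : cell) : adj u v -> (step u v).2 < 0 -> step u v = dS.
Proof.
rewrite /adj /step /dS; case: u v => [u1 u2] [v1 v2] /= /eqP H Hp.
congr pair; lia.
Qed.

Arguments unit_stepE {u v}.
Arguments unit_stepS {u v}.

Lemma steps_adj : forall p a st, path adj a p -> st \in steps a p ->
  exists u v, adj u v /\ st = step u v.
Proof.
elim => [|x p IH] a st //= /andP [h hp]; rewrite inE => /orP [/eqP ->|hin].
  by exists a, x.
exact: IH hp hin.
Qed.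
Arguments steps_adj {p a st}.

Lemma last_x : forall p a, (forall st, st \in steps a p -> st.1 <= 0) -> (last a p).1 <= a.1.
Proof.
elim => [|x p IH] a //= h.
have h1 := h (step a x); rewrite inE eqxx /= in h1.
have h2 : (last x p).1 <= x.1 by apply: IH => st hs; apply: h; rewrite inE hs orbT.
have := h1 erefl; rewrite /step /=; lia.
Qed.

Lemma last_y : forall p a, (forall st, st \in steps a p -> 0 <= st.2) -> a.2 <= (last a p).2.
Proof.
elim => [|x p IH] a //= h.
have h1 := h (step a x); rewrite inE eqxx /= in h1.
have h2 : x.2 <= (last x p).2 by apply: IH => st hs; apply: h; rewrite inE hs orbT.
have := h1 erefl; rewrite /step /=; lia.
Qed.

Lemma all_ES a p : path adj a p -> monotone a p -> a.1 < (last a p).1 ->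
  (last a p).2 < a.2 -> all isES (steps a p).
Proof.
move=> hp hm hx hy.
have hE : dE \in steps a p.
  apply/negPn/negP => hn; move: hx; rewrite ltNge => /negP; apply.
  apply: last_x => st hs; rewrite leNgt; apply/negP => hpos.
  have [u [v [huv est]]] := steps_adj hp hs.
  rewrite est in hpos hs; rewrite (unit_stepE huv hpos) in hs; by rewrite hs in hn.
have hS : dS \in steps a p.
  apply/negPn/negP => hn; move: hy; rewrite ltNge => /negP; apply.
  apply: last_y => st hs; rewrite leNgt; apply/negP => hpos.
  have [u [v [huv est]]] := steps_adj hp hs.
  rewrite est in hpos hs; rewrite (unit_stepS huv hpos) in hs; by rewrite hs in hn.
apply/allP => st hs; rewrite /isES; apply/negPn/negP; rewrite negb_or => /andP [n1 n2].
have hu : uniq [:: st; dE; dS] by rewrite /= !inE negb_or n1 n2.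
have hsub : {subset [:: st; dE; dS] <= undup (steps a p)}.
  by move=> z; rewrite !inE mem_undup => /or3P [] /eqP ->.
have := uniq_leq_size hu hsub; move: hm; rewrite /monotone /=.
by case: (size _) => [|[|[|]]].
Qed.

Lemma corner P a b : Z_convex P -> a \in P -> b \in P -> a.1 < b.1 -> b.2 < a.2 ->
 (exists p0, [/\ a.1 <= p0 <= b.1, (p0, a.2) \in P & (p0, b.2) \in P]) \/
 (exists q, [/\ b.2 <= q <= a.2, (a.1, q) \in P & (b.1, q) \in P]).
Proof.
move=> [_ hZ] aP bP hx hy.
have [p [[[hp hall hlast] _] hm hc]] := hZ a b aP bP.
have hne : p != [::] by case: p hlast {hp hall hm hc} => //= hab; rewrite hab ltxx in hx.
have hES : all isES (steps a p) by apply: all_ES => //; rewrite hlast.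
have := @spec_path P p a 2 hp hall hES hne hc; rewrite hlast.
have : isES (step a (head a p)) by case: p hne hES {hp hall hm hc hlast} => //= x p _ /andP [].
rewrite /isES => /orP [] /eqP ->.
- rewrite /= /other eqxx => -[m [mP [h0 [m2 [m2P [h1 h2]]]]]].
  move: h0 h1 h2; rewrite /Spec0 eqxx /= => -[e1 e2] [e3 e4] [e5 e6].
  left; exists m.1; split.
  + apply/andP; split; lia.
  + by rewrite -e1 -surjective_pairing.
  + by rewrite e5 -e3 -surjective_pairing.
- rewrite /= /other /= => -[m [mP [h0 [m2 [m2P [h1 h2]]]]]].
  move: h0 h1 h2; rewrite /Spec0 eqxx /= => -[e1 e2] [e3 e4] [e5 e6].
  right; exists m.2; split.
  + apply/andP; split; lia.
  + by rewrite -e1 -surjective_pairing.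
  + by rewrite e5 -e3 -surjective_pairing.
Qed.

Theorem mainTheorem3 (P : {fset cell})
  (xl xr yX yY xS xT yS : int)
  (hZ : Z_convex P) (hnc : ~ centered P)
  (hxl : forall c, c \in P -> xl <= c.1) (hxl_in : exists y, (xl, y) \in P)
  (hxr : forall c, c \in P -> c.1 <= xr) (hxr_in : exists y, (xr, y) \in P)
  (hX_in : (xl, yX) \in P) (hX : forall y, (xl, y) \in P -> y <= yX)
  (hY_in : (xl, yY) \in P) (hY : forall y, (xl, y) \in P -> yY <= y)
  (hdesc : forall y, (xr, y) \in P -> y < yY)
  (hS_in : (xS, yX) \in P) (hS : forall x, (x, yX) \in P -> x <= xS)
  (hT_in : (xT, yY) \in P) (hT : forall x, (x, yY) \in P -> x <= xT)
  (hyS_in : (xS, yS) \in P) (hyS : forall y, (xS, y) \in P -> yS <= y) :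
  forall c, c \in P -> xT < c.1 -> yS <= c.2.
Proof.
have hconv := hZ.1.2.
have [hrow hcol] := hconv.
have hxlT : xl <= xT by exact: (hxl _ hT_in).
have hYX : yY <= yX by exact: (hX _ hY_in).
have hSX : yS <= yX by exact: (hyS _ hS_in).
have [yr hr] := hxr_in.
have hyr : yr < yY by exact: hdesc.
have hTr : xT < xr.
  have := hxr _ hT_in; rewrite /= le_eqVlt => /orP [/eqP e|//].
  by move: hT_in; rewrite e => /hdesc; rewrite ltxx.
have L : forall x y, (x, y) \in P -> xT < x -> y < yY.
  move=> x y hxy hxT.
  have hxxr : x <= xr by exact: (hxr _ hxy).
  case: (@corner P (xl, yX) (xr, yr) hZ hX_in hr) => /=; try lia.
  - move=> [p0 [/andP [h1 h2] hp1 hp2]].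
    have hp0Y : (p0, yY) \in P by apply: (hcol p0 yr yX) => //; apply/andP; split; lia.
    have hp0T := hT _ hp0Y.
    have hxr' : (x, yr) \in P by apply: (hrow yr p0 xr) => //; apply/andP; split; lia.
    rewrite ltNge; apply/negP => hyY.
    have : (x, yY) \in P by apply: (hcol x yr y) => //; apply/andP; split; lia.
    move/hT; lia.
  - move=> [q [/andP [h1 h2] hq1 hq2]].
    have := hY _ hq1; have := hdesc _ hq2; lia.
move=> [x y] hc /= hxT.
rewrite leNgt; apply/negP => hy.
case: (@corner P (xl, yX) (x, y) hZ hX_in hc) => /=; try lia.
- move=> [p0 [/andP [h1 h2] hp1 hp2]].
  have hp0S := hS _ hp1.
  case: (lerP xS x) => hSx.
    have : (xS, y) \in P by apply: (hrow y p0 x) => //; apply/andP; split; lia.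
    move/hyS; lia.
  have : (x, yX) \in P by apply: (hrow yX xl xS) => //; apply/andP; split; lia.
  move/L => /(_ hxT); lia.
- move=> [q [/andP [h1 h2] hq1 hq2]].
  have := hY _ hq1; have := L _ _ hq2 hxT; lia.
Qed.
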